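(* Let $R$ be a ring. The following are equivalent: (i) $R$ is strongly nil-clean; (ii) ${\rm T}_n(R)$ is strongly weakly nil-clean for all $n \in \mathbb{N}$; (iii) ${\rm T}_n(R)$ is strongly weakly nil-clean for some $n \geq 3$; (iv) ${\rm T}_n(R)$ is GSWNC for some $n \geq 3$.
   Context: All rings are associative with identity. ${\rm T}_n(R)$ denotes the ring of $n\times n$ upper triangular matrices over $R$. An element $a$ of a ring is strongly nil-clean if $a = e + q$ with $e$ idempotent, $q$ nilpotent and $eq = qe$; it is strongly weakly nil-clean if there exist an idempotent $e$ and a nilpotent $q$ with $eq = qe$ such that $a = q + e$ or $a = q - e$. A ring is strongly nil-clean (resp. strongly weakly nil-clean) if all its elements are. A ring is GSWNC if every non-invertible element is strongly weakly nil-clean. *)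

(* Defs.v *)
From mathcomp Require Import all_boot all_order all_algebra.
Set Implicit Arguments. Unset Strict Implicit. Unset Printing Implicit Defensive.
Import GRing.Theory.
Local Open Scope ring_scope.

Definition is_idempotent (R : pzRingType) (e : R) : Prop := e * e = e.
Definition is_nilpotent (R : pzRingType) (q : R) : Prop := exists k : nat, q ^+ k = 0.

Definition sn_clean_elt (R : pzRingType) (a : R) : Prop :=
  exists e q : R, is_idempotent e /\ is_nilpotent q /\ e * q = q * e /\ a = e + q.

Definition strongly_nil_clean (R : pzRingType) : Prop :=
  forall a : R, sn_clean_elt a.

(* T_n(R): upper triangular n x n matrices, viewed as a subring of M_n(R). *)
Definition upper_trig (R : pzRingType) (n : nat) (A : 'M[R]_n) : Prop :=
  forall i j : 'I_n, (j < i)%N -> A i j = 0.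

Definition mx_pow (R : pzRingType) (n : nat) (A : 'M[R]_n) (k : nat) : 'M[R]_n :=
  iter k (mulmx A) 1%:M.

Definition Tn_swnc_elt (R : pzRingType) (n : nat) (A : 'M[R]_n) : Prop :=
  exists E Q : 'M[R]_n,
    [/\ upper_trig E, upper_trig Q, E *m E = E,
        (exists k : nat, mx_pow Q k = 0) & E *m Q = Q *m E]
    /\ (A = Q + E \/ A = Q - E).

Definition Tn_unit (R : pzRingType) (n : nat) (A : 'M[R]_n) : Prop :=
  exists B : 'M[R]_n, upper_trig B /\ A *m B = 1%:M /\ B *m A = 1%:M.

Definition Tn_strongly_weakly_nil_clean (R : pzRingType) (n : nat) : Prop :=
  forall A : 'M[R]_n, upper_trig A -> Tn_swnc_elt A.

Definition Tn_GSWNC (R : pzRingType) (n : nat) : Prop :=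
  forall A : 'M[R]_n, upper_trig A -> ~ Tn_unit A -> Tn_swnc_elt A.

(* Main.v *)
Require Import Defs.
From mathcomp Require Import all_boot all_order all_algebra.
From HB Require Import structures.
From mathcomp Require Import zify ring.
Set Implicit Arguments. Unset Strict Implicit.
Import GRing.Theory.
Local Open Scope ring_scope.

Fixpoint pk (k : nat) : {poly int} :=
  if k is k'.+1 then 3%:R * (pk k')^+2 - 2%:R * (pk k')^+3 else 'X.

Lemma pkA k : exists r, pk k - (pk k)^+2 = ('X - 'X^2)^+(2^k) * r.
Proof.
elim: k => [|k [r IH]]; first by exists 1; rewrite expn0 expr1 mulr1.
exists (r^+2 * (3%:R + 4%:R * (pk k - (pk k)^+2))).
rewrite /= expnS mul2n -addnn exprD.
set u := pk k in IH *. set T := ('X - 'X^2)^+(2^k) in IH *.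
have -> : 3%:R * u^+2 - 2%:R * u^+3 - (3%:R * u^+2 - 2%:R * u^+3)^+2
   = (u - u^+2)^+2 * (3%:R + 4%:R * (u - u^+2)) by ring.
rewrite IH; ring.
Qed.

Lemma pkB k : exists w, 'X - pk k = ('X - 'X^2) * w.
Proof.
elim: k => [|k [w IH]]; first by exists 0; rewrite subrr mulr0.
have [r Hr] := pkA k.
exists (w + ('X - 'X^2)^+(2^k).-1 * r * (1 - 2%:R * pk k)).
have Hs : pk k - (pk k)^+2 = ('X - 'X^2) * (('X - 'X^2)^+(2^k).-1 * r).
  by rewrite Hr -(prednK (expn_gt0 2 k)) exprS mulrA.
rewrite /=. set u := pk k in IH Hs *. set T := ('X - 'X^2)^+(2^k).-1 in Hs *.
set t := 'X - 'X^2 in IH Hs *.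
have -> : 'X - (3%:R * u ^+ 2 - 2%:R * u ^+ 3) = ('X - u) + (u - u^+2) * (1 - 2%:R * u) by ring.
rewrite IH Hs; ring.
Qed.

Lemma nil_le (S : pzRingType) (x : S) k m : x ^+ k = 0 -> (k <= m)%N -> x ^+ m = 0.
Proof. by move=> hk hm; rewrite -(subnKC hm) exprD hk mul0r. Qed.

Lemma lift_nz (S : nzRingType) (x : S) m (P : S -> Prop) :
  (x - x^+2)^+m = 0 -> P x -> (forall c : int, P c%:~R) ->
  (forall a b, P a -> P b -> P (a + b)) -> (forall a b, P a -> P b -> P (a * b)) ->
  exists e : S, [/\ e * e = e, e * x = x * e, (exists k, (x - e)^+k = 0) & P e].
Proof.
move=> hm Px Pc PD PM.
have cf : commr_rmorph ( *~%R (1:S)) x by move=> c; exact: commr_int.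
pose phi : {rmorphism {poly int} -> S} := horner_morph cf.
have phiX : phi 'X = x by rewrite /phi /= horner_morphX.
have phit : phi ('X - 'X^2) = x - x^+2 by rewrite rmorphB rmorphXn phiX.
exists (phi (pk m)); split.
- have [r Hr] := pkA m.
  have : phi (pk m - (pk m)^+2) = 0.
    rewrite Hr rmorphM rmorphXn phit.
    by rewrite (nil_le hm (ltnW (ltn_expl m (ltnSn 1)))) mul0r.
  by rewrite rmorphB rmorphXn expr2 => /eqP; rewrite subr_eq0 => /eqP <-.
- by rewrite -phiX -!rmorphM mulrC.
- have [w Hw] := pkB m; exists m.
  rewrite -{1}phiX -rmorphB Hw -rmorphXn exprMn rmorphM rmorphXn phit hm mul0r.
  by [].
- elim/poly_ind: (pk m) => [|p c IH].
    by rewrite rmorph0; have := Pc 0; rewrite mulr0z.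
  rewrite rmorphD rmorphM phiX /phi /= horner_morphC.
  by apply: PD; [apply: PM | apply: Pc].
Qed.

Lemma lift_idem (S : pzRingType) (x : S) m (P : S -> Prop) :
  (x - x^+2)^+m = 0 -> P x -> (forall c : int, P c%:~R) ->
  (forall a b, P a -> P b -> P (a + b)) -> (forall a b, P a -> P b -> P (a * b)) ->
  exists e : S, [/\ e * e = e, e * x = x * e, (exists k, (x - e)^+k = 0) & P e].
Proof.
case: (eqVneq (1:S) 0) => [h10|h10] hm Px Pc PD PM.
  have z : forall y : S, y = 0 by move=> y; rewrite -[y]mulr1 h10 mulr0.
  exists 0; split; first by rewrite mul0r.
  - by rewrite mul0r mulr0.
  - by exists 0%N; exact: z.
  - by have := Pc 0; rewrite mulr0z.
pose S' : nzRingType := HB.pack S (GRing.PzSemiRing_isNonZero.Build S h10).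
exact: (@lift_nz S' x m P hm Px Pc PD PM).
Qed.


Lemma ut_mul (R : pzRingType) (n : nat) (A B : 'M[R]_n) : upper_trig A -> upper_trig B -> upper_trig (A * B).
Proof.
move=> hA hB i j ji; rewrite -mulmxE mxE big1 // => l _.
case: (ltnP l i) => li; first by rewrite hA ?mul0r.
by rewrite hB ?mulr0 // (leq_trans ji li).
Qed.

Lemma ut_dmul (R : pzRingType) (n : nat) (A B : 'M[R]_n) i : upper_trig A -> upper_trig B -> (A * B) i i = A i i * B i i.
Proof.
move=> hA hB; rewrite -mulmxE mxE (bigD1 i) //= big1 ?addr0 // => l hl.
case: (ltngtP l i) => h; first by rewrite hA ?mul0r.
  by rewrite hB ?mulr0.
by move/val_inj: h => h; rewrite h eqxx in hl.
Qed.

Lemma ut1 (R : pzRingType) (n : nat) : upper_trig (1 : 'M[R]_n).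
Proof.
move=> i j ji; rewrite -idmxE mxE; case: eqP => // e.
by rewrite e ltnn in ji.
Qed.

Lemma ut0 (R : pzRingType) (n : nat) : upper_trig (0 : 'M[R]_n).
Proof. by move=> i j _; rewrite mxE. Qed.

Lemma utD (R : pzRingType) (n : nat) (A B : 'M[R]_n) : upper_trig A -> upper_trig B -> upper_trig (A + B).
Proof. by move=> hA hB i j ji; rewrite mxE hA ?hB ?addr0. Qed.

Lemma utN (R : pzRingType) (n : nat) (A : 'M[R]_n) : upper_trig A -> upper_trig (- A).
Proof. by move=> hA i j ji; rewrite mxE hA ?oppr0. Qed.

Lemma utB (R : pzRingType) (n : nat) (A B : 'M[R]_n) : upper_trig A -> upper_trig B -> upper_trig (A - B).
Proof. by move=> hA hB; apply: utD => //; apply: utN. Qed.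

Lemma ut_int (R : pzRingType) (n : nat) (c : int) : upper_trig (c%:~R : 'M[R]_n).
Proof.
have hn : forall k : nat, upper_trig (k%:R : 'M[R]_n).
  elim=> [|k IH]; first by rewrite mulr0n; exact: ut0.
  by rewrite mulrS; apply: utD => //; exact: ut1.
by case: c => k; [exact: hn | rewrite NegzE mulrNz; apply: utN; exact: hn].
Qed.

Lemma ut_pow (R : pzRingType) (n : nat) (A : 'M[R]_n) k : upper_trig A -> upper_trig (A ^+ k) /\ forall i, (A ^+ k) i i = (A i i) ^+ k.
Proof.
move=> hA; elim: k => [|k [IH1 IH2]].
  split; first exact: ut1.
  by move=> i; rewrite !expr0 -idmxE mxE eqxx.
split; first by rewrite exprS; apply: ut_mul.
by move=> i; rewrite !exprS ut_dmul // IH2.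
Qed.

Lemma strict_pow (R : pzRingType) (n : nat) (S : 'M[R]_n) : (forall i j : 'I_n, (j <= i)%N -> S i j = 0) ->
  forall k (i j : 'I_n), (j < i + k)%N -> (S ^+ k) i j = 0.
Proof.
move=> hS; elim=> [|k IH] i j.
  rewrite addn0 expr0 -idmxE mxE => ji; case: eqP => // e.
  by rewrite e ltnn in ji.
move=> h; rewrite exprS -mulmxE mxE big1 // => l _.
case: (leqP l i) => li; first by rewrite hS ?mul0r.
rewrite IH ?mulr0 //; apply: (leq_trans h); rewrite addnS -addSn leq_add2r //.
Qed.

Lemma mxpowE (R : pzRingType) (n : nat) (A : 'M[R]_n) k : mx_pow A k = A ^+ k.
Proof.
elim: k => [|k IH]; first by rewrite expr0 /mx_pow /= idmxE.
by rewrite exprS -IH /mx_pow /= mulmxE.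
Qed.

Lemma ut_nil (R : pzRingType) (n : nat) (A : 'M[R]_n) : upper_trig A -> (forall i, exists k, (A i i) ^+ k = 0) ->
  exists K, A ^+ K = 0.
Proof.
move=> hA hd.
have [K0 HK0] : exists K0, forall i, (A i i) ^+ K0 = 0.
  suff : forall s : seq 'I_n, exists K0, forall i, i \in s -> (A i i) ^+ K0 = 0.
    by case/(_ (enum 'I_n)) => K0 HK; exists K0 => i; apply: HK; rewrite mem_enum.
  elim=> [|a s [K IH]]; first by exists 0%N.
  have [ka Hka] := hd a; exists (K + ka)%N => i; rewrite inE => /orP [/eqP ->|his].
    by rewrite exprD Hka mulr0.
  by rewrite exprD IH ?mul0r.
have [u1 u2] := ut_pow K0 hA.
exists (K0 * n)%N; rewrite exprM; apply/matrixP => i j; rewrite [RHS]mxE.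
apply: strict_pow; last by rewrite (leq_trans (ltn_ord j)) // leq_addl.
move=> i' j'; rewrite leq_eqVlt => /orP [/eqP e|lt]; last by rewrite u1.
by move/val_inj: e => ->; rewrite u2.
Qed.


Lemma transfer (S : pzRingType) (x : S) : exists phi : {rmorphism {poly int} -> S}, phi 'X = x.
Proof.
case: (eqVneq (1:S) 0) => [h10|h10].
  have z : forall y : S, y = 0 by move=> y; rewrite -[y]mulr1 h10 mulr0.
  exists ((intr : int -> S) \o horner_eval (0:int)); rewrite [x]z; exact: z.
pose S' : nzRingType := HB.pack S (GRing.PzSemiRing_isNonZero.Build S h10).
pose x' : S' := x.
have cf : commr_rmorph ( *~%R (1:S')) x' by move=> c; exact: commr_int.
exists (horner_morph cf : {rmorphism {poly int} -> S'}).
by rewrite /= horner_morphX.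
Qed.

Lemma L1eq (R : pzRingType) (e q : R) : e*e = e -> e*q = q*e ->
  (e+q) - (e+q)^+2 = q * (1 - e*+2 - q).
Proof.
move=> he eq.
rewrite expr2 mulrDl !mulrDr he eq !mulrN mulr1 mulr2n mulrDr.
rewrite -[e + q * e + _]addrA [q * e + (q * e + _)]addrA [in LHS]opprD addrACA subrr add0r.
by rewrite opprD addrA.
Qed.

Lemma nil_add (S : pzRingType) (x y : S) k1 k2 : GRing.comm x y ->
  x ^+ k1 = 0 -> y ^+ k2 = 0 -> (x + y) ^+ (k1 + k2) = 0.
Proof.
move=> cxy h1 h2; rewrite exprDn_comm // big1 // => i _.
case: (leqP k2 i) => hi; first by rewrite (nil_le h2 hi) mulr0 mul0rn.
rewrite (@nil_le _ x k1) ?mul0r ?mul0rn //.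
have := ltn_ord i; lia.
Qed.

Lemma SNC_nil (R : pzRingType) : strongly_nil_clean R -> forall a : R, exists k, (a - a^+2)^+k = 0.
Proof.
move=> h a; have [e [q [he [[k hk] [eq ->]]]]] := h a.
rewrite L1eq //; exists k; rewrite exprMn_comm ?hk ?mul0r //.
apply: commrB; last exact: commr_refl.
apply: commrB; first exact: commr1.
by apply: commrMn; rewrite /GRing.comm eq.
Qed.

Lemma dir1 (R : pzRingType) : strongly_nil_clean R -> forall n, Tn_strongly_weakly_nil_clean R n.
Proof.
move=> h n A hA.
have hD : upper_trig (A - A^+2) := utB hA (ut_pow 2 hA).1.
have [K hK] : exists K, (A - A^+2)^+K = 0.
  apply: ut_nil hD _ => i.
  have -> : (A - A^+2) i i = A i i - (A i i)^+2.
    by rewrite mxE [X in _ + X]mxE (ut_pow 2 hA).2.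
  exact: SNC_nil.
have [E [EE EA [k hk] uE]] := lift_idem hK hA (@ut_int R n) (@utD R n) (@ut_mul R n).
exists E, (A - E); split; last by left; rewrite subrK.
split => //; [exact: utB | by exists k; rewrite mxpowE | ].
change (E * (A - E) = (A - E) * E).
by rewrite mulrBr mulrBl EE EA.
Qed.

Lemma dfacts (R : pzRingType) n (E Q : 'M[R]_n) k i : upper_trig E -> upper_trig Q ->
  E *m E = E -> mx_pow Q k = 0 -> E *m Q = Q *m E ->
  [/\ E i i * E i i = E i i, (Q i i)^+k = 0 & E i i * Q i i = Q i i * E i i].
Proof.
move=> uE uQ; rewrite mxpowE => EE hk EQ.
change (E * E = E) in EE; change (E * Q = Q * E) in EQ; split.
- by rewrite -ut_dmul // EE.
- by rewrite -(ut_pow k uQ).2 hk mxE.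
- by rewrite -!ut_dmul // EQ.
Qed.

Lemma dir4 (R : pzRingType) n : (3 <= n)%N -> Tn_GSWNC R n -> strongly_nil_clean R.
Proof.
move=> hn hG a.
case: (eqVneq (1:R) 0) => [h10|h10].
  have z : forall y : R, y = 0 by move=> y; rewrite -[y]mulr1 h10 mulr0.
  exists 0, 0; split; first by rewrite /is_idempotent mul0r.
  split; first by exists 1%N; rewrite expr1.
  by split; [rewrite mul0r | rewrite addr0; exact: z].
have h0 : (0 < n)%N by lia.
have h1 : (1 < n)%N by lia.
have hl : (n.-1 < n)%N by lia.
pose i0 := Ordinal h0; pose i1 := Ordinal h1; pose il := Ordinal hl.
pose A : 'M[R]_n := \matrix_(i, j) if i == j then (if i == i0 then a else if i == i1 then 1 else 0) else 0.
have hA : upper_trig A.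
  move=> i j ji; rewrite mxE; case: eqP => // e.
  by rewrite e ltnn in ji.
have ne0 : (il == i0) = false by apply/eqP => /(congr1 val) /=; lia.
have ne1 : (il == i1) = false by apply/eqP => /(congr1 val) /=; lia.
have n10 : (i1 == i0) = false by apply/eqP => /(congr1 val) /=; lia.
have nU : ~ Tn_unit A.
  case=> B [_ [AB _]].
  have := congr1 (fun M : 'M[R]_n => M il il) AB.
  rewrite /= mxE [RHS]mxE eqxx big1 => [h|l _].
    by move: h10; rewrite (_ : 1 = true%:R) // -h eqxx.
  rewrite mxE; case: eqP => _; last by rewrite mul0r.
  by rewrite ne0 ne1 mul0r.
have [E [Q [[uE uQ EE [k hk] EQ] hAQ]]] := hG A hA nU.
have [E0 Q0 C0] := dfacts i0 uE uQ EE hk EQ.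
have [E1 Q1 C1] := dfacts i1 uE uQ EE hk EQ.
have A0 : A i0 i0 = a.
 by rewrite mxE (eqxx i0).
have A1 : A i1 i1 = 1 by rewrite mxE (eqxx i1) n10.
case: hAQ => hAQ.
  exists (E i0 i0), (Q i0 i0); split => //; split; first by exists k.
  by split => //; rewrite -A0 hAQ mxE addrC.
have h1q : E i1 i1 = Q i1 i1 - 1.
  by rewrite -A1 hAQ [X in _ - X]mxE [X in _ - (_ + X)]mxE opprD opprK addNKr.
set q := Q i1 i1 in Q1 C1 h1q.
have hq : q * (q - 2%:R) = q - 2%:R.
  have [phi phiX] := transfer q.
  have pid : ('X - 1) * ('X - 1) - ('X - 1) = 'X * ('X - 2%:R) - ('X - 2%:R) :> {poly int}.
    by ring.
  have := congr1 phi pid.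
  rewrite !rmorphB !rmorphM !rmorphB !rmorph1 rmorph_nat phiX -h1q E1 subrr => /esym/eqP.
  by rewrite subr_eq0 => /eqP.
have hq2 : forall j, q ^+ j * (q - 2%:R) = q - 2%:R.
  elim=> [|j IH]; first by rewrite expr0 mul1r.
  by rewrite exprSr -mulrA hq.
have two : (2%:R : R) ^+ k = 0.
  have := hq2 k; rewrite Q1 mul0r => /esym/eqP; rewrite subr_eq0 => /eqP <-.
  exact: Q1.
exists (E i0 i0), (Q i0 i0 + (- 2%:R) * E i0 i0); split => //; split.
  exists (k + k)%N; apply: nil_add => //.
    apply: commrM; first by apply: commrN; exact: commr_nat.
    by rewrite /GRing.comm C0.
  rewrite exprMn_comm; last by apply: GRing.commr_sym; apply: commrN; exact: commr_nat.
  by rewrite exprNn two mulr0 mul0r.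
split.
  by rewrite mulrDr mulrDl C0 mulrA (commrN (commr_nat _ 2)).
rewrite -A0 hAQ !mxE.
by rewrite mulNr mulr_natl mulr2n opprD addrCA [E i0 i0 + _]addrA subrr add0r.
Qed.

Lemma swnc_gswnc (R : pzRingType) n : Tn_strongly_weakly_nil_clean R n -> Tn_GSWNC R n.
Proof. by move=> h A hA _; apply: h. Qed.

Local Close Scope ring_scope.

Theorem proposition2p9 (R : pzRingType) :
  (strongly_nil_clean R <-> forall n : nat, Tn_strongly_weakly_nil_clean R n) /\
  (strongly_nil_clean R <-> exists n : nat, (3 <= n)%N /\ Tn_strongly_weakly_nil_clean R n) /\
  (strongly_nil_clean R <-> exists n : nat, (3 <= n)%N /\ Tn_GSWNC R n).
Proof.
split; [|split]; split.
- exact: dir1.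
- by move=> h; apply: (@dir4 R 3) => //; apply: swnc_gswnc.
- by move=> h; exists 3%N; split => //; apply: dir1.
- by case=> n [hn h]; apply: (dir4 hn); apply: swnc_gswnc.
- by move=> h; exists 3%N; split => //; apply: swnc_gswnc; apply: dir1.
- by case=> n [hn h]; apply: (dir4 hn).
Qed.
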